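(* Let $G=(V,E)$ be a strongly biconnected directed graph, and let $G^{eb}$ be the undirected simple graph with vertex set $V$ in which distinct vertices $x,y$ are adjacent if and only if $x \overset{e}{\leftrightsquigarrow} y$. Then the $2$-edge-biconnected blocks of $G$ are exactly the vertex sets of the blocks (maximal biconnected subgraphs, where a single edge counts as a block) of $G^{eb}$ that have at least $2$ vertices. In particular, if $G$ has no b-bridges and $|V|\ge 2$, then $V$ is the unique $2$-edge-biconnected block of $G$.
   Context: All graphs are finite. A directed graph $H$ is strongly biconnected if $H$ is strongly connected and its underlying undirected graph is biconnected. A strongly biconnected component of a directed graph $H=(W,F)$ is a maximal vertex subset $C\subseteq W$ such that the induced subgraph $H[C]$ is strongly biconnected. For a strongly biconnected directed graph $G=(V,E)$ and an edge $b\in E$, $G\setminus\{b\}=(V,E\setminus\{b\})$. An edge $b$ of $G$ is a b-bridge if $G\setminus\{b\}$ is not strongly biconnected. For distinct $x,y\in V$, write $x \overset{e}{\leftrightsquigarrow} y$ if for every edge $b\in E$ there is a strongly biconnected component of $G\setminus\{b\}$ containing both $x$ and $y$. A $2$-edge-biconnected block of $G$ is a maximal vertex subset $U\subseteq V$ with $|U|>1$ such that $x \overset{e}{\leftrightsquigarrow} y$ for all distinct $x,y\in U$. *)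

(* Defs.v *)
(* A finite directed graph G = (V, E) is modelled by a
   finite type T of potential vertices, a vertex set V : {set T} and an edge
   set E : {set T * T} of ordered pairs (u, v) = edge u -> v (simple digraph). *)
From mathcomp Require Import all_boot.
Set Implicit Arguments. Unset Strict Implicit. Unset Printing Implicit Defensive.

Section Defs.
Variable T : finType.

Definition dedge (W : {set T}) (F : {set T * T}) : rel T :=
  fun u v => [&& u \in W, v \in W & (u, v) \in F].

Definition strongly_connected (W : {set T}) (F : {set T * T}) : bool :=
  [forall x in W, forall y in W, connect (dedge W F) x y].

Definition uedge (W : {set T}) (r : rel T) : rel T :=
  fun u v => [&& u \in W, v \in W & r u v || r v u].

Definition uconnected (W : {set T}) (r : rel T) : bool :=
  [forall x in W, forall y in W, connect (uedge W r) x y].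

(* Biconnected: connected and without cut vertex (removing any single vertex
   leaves a connected graph).  K_1 and K_2 are biconnected. *)
Definition ubiconnected (W : {set T}) (r : rel T) : bool :=
  uconnected W r && [forall v in W, uconnected (W :\ v) r].

Definition under (F : {set T * T}) : rel T := fun u v => ((u, v) \in F) || ((v, u) \in F).

Definition strongly_biconnected (W : {set T}) (F : {set T * T}) : bool :=
  strongly_connected W F && ubiconnected W (under F).

Definition sbc (W : {set T}) (F : {set T * T}) (C : {set T}) : bool :=
  [&& C \subset W, strongly_biconnected C F &
      [forall D : {set T},
         [&& C \subset D, D \subset W & strongly_biconnected D F] ==> (D == C)]].

Definition bbridge (V : {set T}) (E : {set T * T}) (b : T * T) : bool :=
  (b \in E) && ~~ strongly_biconnected V (E :\ b).

Definition eb_rel (V : {set T}) (E : {set T * T}) (x y : T) : bool :=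
  (x != y) &&
  [forall b in E, exists C : {set T}, [&& sbc V (E :\ b) C, x \in C & y \in C]].

Definition eb_pairwise (V : {set T}) (E : {set T * T}) (U : {set T}) : bool :=
  [forall x in U, forall y in U, (x != y) ==> eb_rel V E x y].

Definition two_eb_block (V : {set T}) (E : {set T * T}) (U : {set T}) : bool :=
  [&& U \subset V, 1 < #|U|, eb_pairwise V E U &
      [forall D : {set T},
         [&& U \subset D, D \subset V, 1 < #|D| & eb_pairwise V E D] ==> (D == U)]].

Definition geb (V : {set T}) (E : {set T * T}) : rel T :=
  fun x y => [&& x \in V, y \in V & eb_rel V E x y].

Definition ublock (V : {set T}) (r : rel T) (B : {set T}) : bool :=
  [&& B \subset V, ubiconnected B r &
      [forall D : {set T},
         [&& B \subset D, D \subset V & ubiconnected D r] ==> (D == B)]].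

End Defs.

(* Main.v *)
Require Import Defs.
From mathcomp Require Import all_boot.
Set Implicit Arguments. Unset Strict Implicit. Unset Printing Implicit Defensive.

Section Aux.
Variable T : finType.
Implicit Types (W : {set T}) (F : {set T * T}) (r : rel T).

Lemma allP2 W (P : T -> T -> bool) :
  reflect (forall x y, x \in W -> y \in W -> P x y)
          [forall x in W, forall y in W, P x y].
Proof.
apply: (iffP forallP) => [H x y Hx Hy | H x].
  by move/implyP: (H x) => /(_ Hx) /forallP /(_ y) /implyP; apply.
by apply/implyP => Hx; apply/forallP => y; apply/implyP => Hy; apply: H.
Qed.

Lemma dedge_conn_mono W W' F x y : W \subset W' ->
  connect (dedge W F) x y -> connect (dedge W' F) x y.
Proof.
move=> sWW'; apply: connect_sub => u v /and3P[Hu Hv Huv].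
by apply: connect1; rewrite /dedge (subsetP sWW' _ Hu) (subsetP sWW' _ Hv).
Qed.

Lemma uedge_conn_mono W W' r x y : W \subset W' ->
  connect (uedge W r) x y -> connect (uedge W' r) x y.
Proof.
move=> sWW'; apply: connect_sub => u v /and3P[Hu Hv Huv].
by apply: connect1; rewrite /uedge (subsetP sWW' _ Hu) (subsetP sWW' _ Hv).
Qed.

Lemma sc_uconn W F : strongly_connected W F -> uconnected W (under F).
Proof.
move/allP2 => H; apply/allP2 => x y Hx Hy.
apply: connect_sub (H x y Hx Hy) => u v /and3P[Hu Hv Huv].
by apply: connect1; rewrite /uedge Hu Hv /under Huv.
Qed.

Lemma conn_core (e : rel T) (A W : {set T}) :
  (forall a b, a \in A -> b \in A -> connect e a b) ->
  (forall u, u \in W -> exists2 a, a \in A & connect e a u && connect e u a) ->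
  forall x y, x \in W -> y \in W -> connect e x y.
Proof.
move=> HA HW x y /HW [a Ha /andP[_ Hxa]] /HW [b Hb /andP[Hby _]].
by apply: connect_trans Hxa (connect_trans (HA a b Ha Hb) Hby).
Qed.

End Aux.

Section Union.
Variable T : finType.
Variable F : {set T * T}.
Variable s : rel T.
Variable C : T -> T -> {set T}.
Hypothesis HC : forall x y, s x y ->
  [&& strongly_biconnected (C x y) F, x \in C x y & y \in C x y].
Hypothesis Hirr : forall x, ~~ s x x.
Variable D : {set T}.

Definition Uset := D :|: \bigcup_(p | [&& s p.1 p.2, p.1 \in D & p.2 \in D]) C p.1 p.2.

Lemma inU u : u \in Uset -> u \in D \/
  exists x y, [/\ s x y, x \in D, y \in D & u \in C x y].
Proof.
rewrite inE => /orP[-> | /bigcupP[[x y] /= /and3P[H1 H2 H3] Hu]]; first by left.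
by right; exists x, y.
Qed.

Lemma CsubU x y : s x y -> x \in D -> y \in D -> C x y \subset Uset.
Proof.
move=> H1 H2 H3; apply/subsetP => u Hu; rewrite inE; apply/orP; right.
by apply/bigcupP; exists (x, y) => //=; rewrite H1 H2 H3.
Qed.

Lemma DsubU : D \subset Uset.
Proof. by apply/subsetP => u Hu; rewrite inE Hu. Qed.

Lemma minus_id (W : {set T}) v : v \notin W -> W :\ v = W.
Proof.
move=> Hv; apply/setP => u; rewrite !inE; case: eqP => // ->.
by rewrite (negbTE Hv).
Qed.

Lemma sb_minus (W : {set T}) v : strongly_biconnected W F ->
  uconnected (W :\ v) (under F).
Proof.
case/andP=> _ /andP[Hc Hb]; case Hv: (v \in W).
  by move/forallP: Hb => /(_ v) /implyP; apply.
by rewrite minus_id ?Hv.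
Qed.

Lemma ub_minus (W : {set T}) r v : ubiconnected W r -> uconnected (W :\ v) r.
Proof.
case/andP=> Hc Hb; case Hv: (v \in W).
  by move/forallP: Hb => /(_ v) /implyP; apply.
by rewrite minus_id ?Hv.
Qed.

Lemma key : ubiconnected D s -> strongly_biconnected Uset F.
Proof.
move=> HD.
have HsC x y : s x y -> strongly_connected (C x y) F.
  by move/HC => /and3P[/andP[]].
have sc : strongly_connected Uset F.
  apply/allP2; apply: (conn_core (A := D)).
  - move=> a b Ha Hb; case/andP: HD => /allP2 /(_ a b Ha Hb) Hab _.
    apply: connect_sub Hab => u w /and3P[Hu Hw /orP[] Huw].
      have /and3P[_ H1 H2] := HC Huw.
      apply: dedge_conn_mono (CsubU Huw Hu Hw) _.
      by move/allP2: (HsC _ _ Huw); apply.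
    have /and3P[_ H1 H2] := HC Huw.
    apply: dedge_conn_mono (CsubU Huw Hw Hu) _.
    by move/allP2: (HsC _ _ Huw); apply.
  - move=> u /inU [Hu | [x [y [Hxy Hx Hy Hu]]]].
      by exists u => //; rewrite connect0.
    exists x => //; have /and3P[_ H1 H2] := HC Hxy.
    move/allP2: (HsC _ _ Hxy) => Hs.
    by apply/andP; split; apply: (dedge_conn_mono (CsubU Hxy Hx Hy)); apply: Hs.
apply/andP; split => //; apply/andP; split; first exact: sc_uconn.
apply/forallP => v; apply/implyP => _.
apply/allP2; apply: (conn_core (A := D :\ v)).
- move=> a b Ha Hb; move/allP2: (ub_minus v HD) => /(_ a b Ha Hb) Hab.
  apply: connect_sub Hab => u w /and3P[Hu Hw /orP[] Huw].
    have /and3P[Hsb H1 H2] := HC Huw.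
    move: Hu Hw; rewrite !inE => /andP[Huv Hu] /andP[Hwv Hw].
    apply: uedge_conn_mono (setSD _ (CsubU Huw Hu Hw)) _.
    by move/allP2: (sb_minus v Hsb); apply; rewrite !inE ?Huv ?Hwv.
  have /and3P[Hsb H1 H2] := HC Huw.
  move: Hu Hw; rewrite !inE => /andP[Huv Hu] /andP[Hwv Hw].
  apply: uedge_conn_mono (setSD _ (CsubU Huw Hw Hu)) _.
  by move/allP2: (sb_minus v Hsb); apply; rewrite !inE ?Huv ?Hwv.
- move=> u; rewrite inE => /andP[Huv /inU [Hu | [x [y [Hxy Hx Hy Hu]]]]].
    exists u; first by rewrite inE Huv Hu.
    by rewrite connect0.
  have /and3P[Hsb H1 H2] := HC Hxy.
  move/allP2: (sb_minus v Hsb) => Hs.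
  have sub := setSD [set v] (CsubU Hxy Hx Hy).
  have Hsu : forall a, a \in C x y -> a != v ->
     connect (uedge (Uset :\ v) (under F)) a u && connect (uedge (Uset :\ v) (under F)) u a.
    move=> a Ha Hav; have HaCv : a \in C x y :\ v by rewrite !inE Hav Ha.
    have HuCv : u \in C x y :\ v by rewrite in_setD Huv Hu.
    by apply/andP; split; apply: (uedge_conn_mono sub); apply: Hs.
  case Hxv: (x == v).
    have Hyv : y != v.
      by apply/negP => /eqP Eyv; move/eqP: Hxv Hxy => ->; rewrite Eyv (negbTE (Hirr v)).
    by exists y; [rewrite !inE Hyv Hy | apply: Hsu].
  by exists x; [rewrite !inE Hxv Hx | apply: Hsu; rewrite ?Hxv].
Qed.

End Union.

Section Main.
Variable T : finType.
Implicit Types (V U D W : {set T}) (E F : {set T * T}).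

Lemma extend V F U : U \subset V -> strongly_biconnected U F ->
  exists M, sbc V F M && (U \subset M).
Proof.
move=> HUV HU.
pose P := fun M : {set T} => [&& U \subset M, M \subset V & strongly_biconnected M F].
have PU : P U by rewrite /P subxx HUV HU.
case: (@arg_maxnP _ U P (fun M => #|M|) PU) => M /and3P[H1 H2 H3] Hmax.
exists M; rewrite H1 andbT /sbc H2 H3 /=.
apply/forallP => D; apply/implyP => /and3P[HMD HDV HD].
have PD : P D by rewrite /P (subset_trans H1 HMD) HDV HD.
by rewrite eq_sym eqEcard HMD; apply: (Hmax D PD).
Qed.

Lemma clique V E b D : b \in E -> D \subset V -> ubiconnected D (geb V E) ->
  exists M, sbc V (E :\ b) M && (D \subset M).
Proof.
move=> Hb HDV HD.
pose C := fun x y => odflt set0 [pick M | [&& sbc V (E :\ b) M, x \in M & y \in M]].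
have HC0 x y : geb V E x y -> [&& sbc V (E :\ b) (C x y), x \in C x y & y \in C x y].
  case/and3P => _ _ /andP[_ /forallP /(_ b) /implyP /(_ Hb) /existsP [M HM]].
  rewrite /C; case: pickP => [M' -> //|]; by move/(_ M); rewrite HM.
have HC x y : geb V E x y ->
   [&& strongly_biconnected (C x y) (E :\ b), x \in C x y & y \in C x y].
  by move/HC0 => /and3P[/and3P[_ H _] -> ->]; rewrite H.
have Hirr x : ~~ geb V E x x by rewrite /geb /eb_rel eqxx /= !andbF.
have sU := key HC Hirr HD.
have UV : Uset (geb V E) C D \subset V.
  apply/subsetP => u /inU [Hu|[x [y [Hxy _ _ Hu]]]]; first exact: (subsetP HDV).
  by case/and3P: (HC0 _ _ Hxy) => /and3P[/subsetP S _ _] _ _; apply: S.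
case: (extend UV sU) => M /andP[HM HUM].
by exists M; rewrite HM (subset_trans (DsubU _ _ _) HUM).
Qed.

Lemma pw_of_ub V E D : D \subset V -> ubiconnected D (geb V E) -> eb_pairwise V E D.
Proof.
move=> HDV HD; apply/allP2 => x y Hx Hy; apply/implyP => Hxy.
rewrite /eb_rel Hxy /=; apply/forallP => b; apply/implyP => Hb.
case: (clique Hb HDV HD) => M /andP[HM /subsetP S].
by apply/existsP; exists M; rewrite HM !S.
Qed.

Lemma clique_uconn V E W : W \subset V ->
  (forall x y, x \in W -> y \in W -> x != y -> eb_rel V E x y) ->
  uconnected W (geb V E).
Proof.
move=> /subsetP HWV H; apply/allP2 => x y Hx Hy.
case: (eqVneq x y) => [-> | Hxy]; first exact: connect0.
by apply: connect1; rewrite /uedge Hx Hy /geb !HWV // H.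
Qed.

Lemma ub_of_pw V E D : D \subset V -> eb_pairwise V E D -> ubiconnected D (geb V E).
Proof.
move=> HDV /allP2 HD.
have H W : W \subset D -> uconnected W (geb V E).
  move=> /subsetP HWD; apply: clique_uconn.
    by apply/subsetP => u /HWD /(subsetP HDV).
  by move=> x y /HWD Hx /HWD Hy Hxy; move/implyP: (HD x y Hx Hy); apply.
apply/andP; split; first exact: H.
by apply/forallP => v; apply/implyP => _; apply: H; apply: subD1set.
Qed.

End Main.

Theorem mainTheorem4 (T : finType) (V : {set T}) (E : {set T * T}) :
  E \subset setX V V ->
  strongly_biconnected V E ->
  (forall U : {set T},
     two_eb_block V E U <-> (ublock V (geb V E) U /\ 1 < #|U|)) /\
  ((forall b, ~~ bbridge V E b) -> 1 < #|V| ->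
     forall U : {set T}, two_eb_block V E U <-> U = V).
Proof.
move=> _ _; split.
  move=> U; split.
    case/and4P => HUV Hc Hpw /forallP Hmax; split => //.
    rewrite /ublock HUV (ub_of_pw HUV Hpw) /=.
    apply/forallP => D; apply/implyP => /and3P[HUD HDV HD].
    apply: (implyP (Hmax D)); rewrite HUD HDV (pw_of_ub HDV HD) andbT.
    exact: leq_trans Hc (subset_leq_card HUD).
  case => /and3P[HUV HU /forallP Hmax] Hc.
  rewrite /two_eb_block HUV Hc (pw_of_ub HUV HU) /=.
  apply/forallP => D; apply/implyP => /and4P[HUD HDV _ HD].
  by apply: (implyP (Hmax D)); rewrite HUD HDV (ub_of_pw HDV HD).
move=> Hnb HV.
have pwV : eb_pairwise V E V.
  apply/allP2 => x y Hx Hy; apply/implyP => Hxy.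
  rewrite /eb_rel Hxy /=; apply/forallP => b; apply/implyP => Hb.
  have Hsb : strongly_biconnected V (E :\ b).
    by move: (Hnb b); rewrite /bbridge Hb /= negbK.
  apply/existsP; exists V; rewrite Hx Hy !andbT /sbc subxx Hsb /=.
  apply/forallP => D; apply/implyP => /and3P[H1 H2 _].
  by rewrite eqEsubset H1 H2.
move=> U; split.
  case/and4P => HUV _ _ /forallP Hmax.
  by apply/esym/eqP; apply: (implyP (Hmax V)); rewrite HUV subxx HV pwV.
move->; rewrite /two_eb_block subxx HV pwV /=.
apply/forallP => D; apply/implyP => /and4P[H1 H2 _ _].
by rewrite eqEsubset H1 H2.
Qed.
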